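(* Define $\mathrm{Mex}(F)=\min(\mathbb{N}_0\setminus F)$ for $F\subseteq\mathbb{N}_0$, and $a+D=\{a+d:d\in D\}$. Define triples $v(n)=(v_1(n),v_2(n),v_3(n))$, $n\ge 0$, recursively by $v(0)=(0,0,0)$ and, for $n\ge 0$, with $F_n=\{v_i(k): 0\le k\le n,\ i\in\{1,2,3\}\}$ and $D_n=\bigcup_{k=0}^{n}\{v_2(k)-v_1(k),\,v_3(k)-v_2(k),\,v_3(k)-v_1(k)\}$, \[ v_1(n+1)=\mathrm{Mex}(F_n),\quad v_2(n+1)=\mathrm{Mex}\big((v_1(n+1)+D_n)\cup\{1,\dots,v_1(n+1)\}\cup F_n\big), \] \[ v_3(n+1)=\mathrm{Mex}\big((v_2(n+1)+D_n)\cup\{1,\dots,v_2(n+1)\}\cup F_n\big). \] Then for all $i,j\in\{1,2,3\}$ with $i>j$ and all $n\ge 0$, \[ v_i(n+1)-v_j(n+1)-\big(v_i(n)-v_j(n)\big)\ge i-j. \]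
   Context: $\mathbb{N}_0$ denotes the nonnegative integers. *)

(* Defs.v *)
From mathcomp Require Import all_boot all_order all_algebra.
Set Implicit Arguments. Unset Strict Implicit. Unset Printing Implicit Defensive.
Import Order.TTheory GRing.Theory Num.Theory.

(* Since s has at most size s elements,
   some k <= size s is not in s, so searching 0..size s suffices and
   [mex s] is exactly min (N_0 \ s). *)
Definition mex (s : seq nat) : nat :=
  find (fun k => k \notin s) (iota 0 (size s).+1).

(* The nonnegative members of a finite set of integers, as naturals
   (so that a + D, computed in int, is intersected with N_0). *)
Definition nat_part (s : seq int) : seq nat :=
  [seq `|x|%N | x <- s & (0 <= x)%R].

Definition triple := (nat * nat * nat)%type.
Definition t1 (t : triple) : nat := t.1.1.
Definition t2 (t : triple) : nat := t.1.2.
Definition t3 (t : triple) : nat := t.2.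

Definition Fset (h : seq triple) : seq nat :=
  flatten [seq [:: t1 t; t2 t; t3 t] | t <- h].

Definition Dset (h : seq triple) : seq int :=
  flatten [seq [:: (t2 t)%:Z - (t1 t)%:Z; (t3 t)%:Z - (t2 t)%:Z;
                   (t3 t)%:Z - (t1 t)%:Z]%R | t <- h].

Definition shift (a : nat) (D : seq int) : seq int := [seq (a%:Z + d)%R | d <- D].

Definition step (h : seq triple) : triple :=
  let F := Fset h in
  let D := Dset h in
  let a := mex F in
  let b := mex (nat_part (shift a D) ++ iota 1 a ++ F) in
  let c := mex (nat_part (shift b D) ++ iota 1 b ++ F) in
  (a, b, c).

Fixpoint hist (n : nat) : seq triple :=
  match n with
  | 0 => [:: (0, 0, 0)]
  | n'.+1 => let h := hist n' in rcons h (step h)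
  end.

Definition v (n : nat) : triple := last (0, 0, 0) (hist n).

Definition vc (i n : nat) : nat :=
  match i with
  | 1 => t1 (v n)
  | 2 => t2 (v n)
  | _ => t3 (v n)
  end.

(* Main.v *)
Require Import Defs.
From mathcomp Require Import all_boot all_order all_algebra zify.
Import Order.TTheory GRing.Theory Num.Theory.

Lemma mex_notin s : mex s \notin s.
Proof.
rewrite /mex.
have : has (fun k => k \notin s) (iota 0 (size s).+1).
  apply/negPn/negP => /hasPn H.
  have Hsub : {subset iota 0 (size s).+1 <= s}.
    by move=> x /H; rewrite negbK.
  have := uniq_leq_size (iota_uniq 0 (size s).+1) Hsub.
  by rewrite size_iota ltnn.
move=> Hh.
have := nth_find 0 Hh.
have Hl : find (fun k => k \notin s) (iota 0 (size s).+1) < (size s).+1.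
  by rewrite -{2}(size_iota 0 (size s).+1) -has_find.
set k := find _ _ in Hl *.
have E : nth 0 (iota 0 (size s).+1) k = k by rewrite nth_iota.
by rewrite E.
Qed.

Lemma mex_min s k : k < mex s -> k \in s.
Proof.
move=> Hk.
have Hsz : mex s <= size (iota 0 (size s).+1) by rewrite /mex find_size.
have := before_find 0 Hk.
rewrite nth_iota ?add0n; first by move/negbFE.
rewrite -(size_iota 0 (size s).+1); exact: leq_trans Hk Hsz.
Qed.

Lemma mem_nat_part (s : seq int) (e : nat) : (e \in nat_part s) = ((e%:Z)%R \in s).
Proof.
apply/idP/idP.
- rewrite /nat_part => /mapP [x]; rewrite mem_filter => /andP [Hx Hs] ->.
  by rewrite gez0_abs.
- move=> H; apply/mapP; exists (e%:Z)%R => //.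
  by rewrite mem_filter H andbT.
Qed.

Lemma mem_np_shift (D : seq int) (a x : nat) :
  (forall d, d \in D -> (0 <= d)%R) ->
  (x \in nat_part (shift a D)) = (a <= x) && (((x - a)%:Z)%R \in D).
Proof.
move=> HD; rewrite mem_nat_part /shift.
apply/mapP/andP.
- move=> [d Hd E].
  have := HD d Hd => H0.
  have Hax : a <= x by lia.
  split=> //.
  have -> : ((x - a)%:Z)%R = d by lia.
  done.
- move=> [Hax Hd]; exists ((x - a)%:Z)%R => //; lia.
Qed.

Lemma Fset_rcons h t : Fset (rcons h t) = Fset h ++ [:: t1 t; t2 t; t3 t].
Proof. by rewrite /Fset map_rcons flatten_rcons. Qed.

Lemma Dset_rcons h t : Dset (rcons h t) = Dset h ++
  [:: ((t2 t)%:Z - (t1 t)%:Z)%R; ((t3 t)%:Z - (t2 t)%:Z)%R; ((t3 t)%:Z - (t1 t)%:Z)%R].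
Proof. by rewrite /Dset map_rcons flatten_rcons. Qed.

Definition inD (h : seq triple) (x : nat) : bool := ((x%:Z)%R \in Dset h).

Ltac prune := repeat match goal with
 | H : forall _, _ |- _ => clear H
 | H : context [inD _ _] |- _ => clear H
 | H : context [in_mem _ _] |- _ => clear H
 | H : context [mex _] |- _ => clear H
 | H : _ = (_, _, _) |- _ => clear H
 end.
Ltac slia := prune; lia.

Record Inv (h : seq triple) (t : triple) : Prop := {
  i_12 : t1 t <= t2 t;
  i_23 : t2 t <= t3 t;
  i_low : forall x, x <= t1 t -> x \in Fset h;
  i_up : forall x, x \in Fset h -> x <= t3 t;
  i_D : forall d, d \in Dset h -> exists x, d = (x%:Z)%R /\ x <= t3 t - t1 t;
  i_int1 : forall e, e <= t2 t - t1 t -> inD h e;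
  i_int2 : forall e, e <= t3 t - t2 t -> inD h e;
  i_spF : forall x y, x \in Fset h -> y \in Fset h -> t2 t < x -> x < y -> x + 3 <= y;
  i_spD : forall x y, inD h x -> inD h y -> t2 t - t1 t < x -> t3 t - t2 t < x -> x < y -> x + 2 <= y
}.

Lemma inD_rcons h t x : t1 t <= t2 t -> t2 t <= t3 t ->
  inD (rcons h t) x = [|| inD h x, x == t2 t - t1 t, x == t3 t - t2 t | x == t3 t - t1 t].
Proof.
move=> H12 H23; rewrite /inD Dset_rcons mem_cat !inE.
congr (_ || _).
have E : forall u w : nat, u <= w -> ((x%:Z)%R == ((w%:Z) - (u%:Z))%R) = (x == w - u).
  move=> u w Huw; apply/eqP/eqP; lia.
by rewrite !E //; lia.
Qed.

Lemma Inv_step h : Inv h (last (0,0,0) h) ->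
  let t := last (0,0,0) h in let t' := step h in
  Inv (rcons h t') t' /\ t2 t - t1 t < t2 t' - t1 t' /\ t3 t - t2 t < t3 t' - t2 t'
  /\ t1 t' <= t2 t' /\ t2 t' <= t3 t'.
Proof.
move=> I t t'; rewrite -/t in I.
case: I => H12 H23 Hlow Hup HD Hint1 Hint2 HspF HspD.
set p1 := t1 t in H12 Hlow HD Hint1 HspD *.
set p2 := t2 t in H12 H23 Hint1 Hint2 HspF HspD *.
set p3 := t3 t in H23 Hup HD Hint2 HspD *.
clearbody p1 p2 p3.
set F := Fset h in Hlow Hup HspF *.
set D := Dset h in HD *.
have Dnn : forall d, d \in D -> (0 <= d)%R.
  by move=> d /HD [x [-> _]].
set a := mex F.
set M := mex (nat_part D).
have aF : a \notin F := mex_notin F.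
have aminF : forall x, x < a -> x \in F := mex_min F.
have Ha : p1 < a.
  rewrite ltnNge; apply/negP => Hle; move: aF; by rewrite Hlow.
have MD : ~~ inD h M by rewrite /inD -mem_nat_part; exact: mex_notin.
have MminD : forall e, e < M -> inD h e.
  by move=> e He; rewrite /inD -mem_nat_part; exact: mex_min.
have HM1 : p2 - p1 < M.
  rewrite ltnNge; apply/negP => Hle; move: MD; by rewrite Hint1.
have HM2 : p3 - p2 < M.
  rewrite ltnNge; apply/negP => Hle; move: MD; by rewrite Hint2.
have F0 : 0 \in F by apply: Hlow.
have Ea : mex F = a by [].
clearbody a M.
have memL : forall (z x : nat), x \in nat_part (shift z D) ++ iota 1 z ++ F =
    [|| (z <= x) && inD h (x - z), (1 <= x) && (x < 1 + z) | x \in F].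
  by move=> z x; rewrite !mem_cat mem_np_shift // mem_iota.
set b := mex (nat_part (shift a D) ++ iota 1 a ++ F).
have bL := mex_notin (nat_part (shift a D) ++ iota 1 a ++ F).
have bmin := mex_min (nat_part (shift a D) ++ iota 1 a ++ F).
rewrite -/b memL in bL; rewrite -/b in bmin.
have Eb : mex (nat_part (shift a D) ++ iota 1 a ++ F) = b by [].
clearbody b.
have Hab : a < b.
  rewrite ltnNge; apply/negP => Hle; move: bL.
  case: (posnP b) => [->|Hb]; first by rewrite F0 !orbT.
  by rewrite /= (_ : b < 1 + a) ?orbT //; slia.
have bF : b \notin F by move: bL; rewrite !negb_or => /and3P [].
have bD : ~~ inD h (b - a).
  by move: bL; rewrite !negb_or (ltnW Hab) /= => /and3P [].
have bmin' : forall x, a < x -> x < b -> (x \in F) || inD h (x - a).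
  move=> x H1 H2; have := bmin x H2; rewrite memL.
  rewrite (ltnW H1) /= (_ : x < 1 + a = false); last by slia.
  by rewrite andbF /= orbC.
have HbM : M <= b - a.
  rewrite leqNgt; apply/negP => Hlt; move: bD; by rewrite MminD.
have HaMF : M < b - a -> a + M \in F.
  move=> Hlt; have := bmin' (a + M); rewrite (_ : a + M - a = M); last by slia.
  rewrite (negbTE MD) orbF; apply; slia.
have HbM2 : b - a <= M + 2.
  rewrite leqNgt; apply/negP => Hlt.
  have HF := HaMF ltac:(slia).
  have D1 : inD h (M + 1).
    have := bmin' (a + M + 1); rewrite (_ : a + M + 1 - a = M + 1); last by slia.
    case/(_ _ _)/orP => //; try slia.
    move=> HF1; have := HspF _ _ HF HF1; slia.
  have D2 : inD h (M + 2).
    have := bmin' (a + M + 2); rewrite (_ : a + M + 2 - a = M + 2); last by slia.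
    case/(_ _ _)/orP => //; try slia.
    move=> HF1; have := HspF _ _ HF HF1; slia.
  have := HspD _ _ D1 D2; slia.
have HbM2' : b - a = M + 2 -> inD h (M + 1).
  move=> E.
  have HF := HaMF ltac:(slia).
  have := bmin' (a + M + 1); rewrite (_ : a + M + 1 - a = M + 1); last by slia.
  case/(_ _ _)/orP => //; try slia.
  move=> HF1; have := HspF _ _ HF HF1; slia.
set c := mex (nat_part (shift b D) ++ iota 1 b ++ F).
have cL := mex_notin (nat_part (shift b D) ++ iota 1 b ++ F).
have cmin := mex_min (nat_part (shift b D) ++ iota 1 b ++ F).
rewrite -/c memL in cL; rewrite -/c in cmin.
have Ec : mex (nat_part (shift b D) ++ iota 1 b ++ F) = c by [].
clearbody c.
have Hbc : b < c.
  rewrite ltnNge; apply/negP => Hle; move: cL.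
  case: (posnP c) => [->|Hc]; first by rewrite F0 !orbT.
  by rewrite /= (_ : c < 1 + b) ?orbT //; slia.
have cD : ~~ inD h (c - b).
  by move: cL; rewrite !negb_or (ltnW Hbc) /= => /and3P [].
have cmin' : forall x, b < x -> x < c -> (x \in F) || inD h (x - b).
  move=> x H1 H2; have := cmin x H2; rewrite memL.
  rewrite (ltnW H1) /= (_ : x < 1 + b = false); last by slia.
  by rewrite andbF /= orbC.
have HcM : c = b + M.
  apply/eqP; rewrite eqn_leq; apply/andP; split.
  - rewrite leqNgt; apply/negP => Hlt.
    have := cmin' (b + M); rewrite (_ : b + M - b = M); last by slia.
    rewrite (negbTE MD) orbF => /(_ ltac:(slia) Hlt) /Hup.
    slia.
  - rewrite leqNgt; apply/negP => Hlt; move: cD.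
    by rewrite MminD //; slia.
have Et' : t' = (a, b, c) by rewrite /t' /step /= -/F -/D Ea Eb Ec.
have E1 : t1 t' = a by rewrite Et'.
have E2 : t2 t' = b by rewrite Et'.
have E3 : t3 t' = c by rewrite Et'.
have Ht3 : p3 + 3 <= c by slia.
rewrite E1 E2 E3.
split; last by slia.
have iD' : forall x, inD (rcons h t') x = [|| inD h x, x == b - a, x == c - b | x == c - a].
  by move=> x; rewrite inD_rcons ?E1 ?E2 ?E3 //; slia.
have iF' : forall x, x \in Fset (rcons h t') = [|| x \in F, x == a, x == b | x == c].
  by move=> x; rewrite Fset_rcons mem_cat !inE E1 E2 E3.
clearbody t'.
split.
- slia.
- slia.
- move=> x Hx; rewrite iF'; case: (ltnP x a) => [/aminF -> //|Hxa].
  by rewrite (_ : x == a) ?orbT //; apply/eqP; slia.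
- move=> x; rewrite iF' => /or4P [/Hup|/eqP->|/eqP->|/eqP->]; slia.
- move=> d; rewrite Dset_rcons mem_cat !inE E1 E2 E3 => /or4P [Hd|/eqP->|/eqP->|/eqP->].
  + have [x [-> Hx]] := HD _ Hd.
    exists x; split => //; slia.
  + exists (b - a); split; slia.
  + exists (c - b); split; slia.
  + exists (c - a); split; slia.
- move=> e He; rewrite iD'.
  case: (ltnP e M) => [/MminD -> //|HeM].
  case: (eqVneq e M) => [->|HneM]; first by rewrite (_ : M == c - b) ?orbT //; apply/eqP; slia.
  case: (eqVneq e (b - a)) => [->|Hne]; first by rewrite orbT.
  have E : e = M + 1 by slia.
  by rewrite E HbM2' //; slia.
- move=> e He; rewrite iD'.
  case: (ltnP e M) => [/MminD -> //|HeM].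
  by rewrite (_ : e == c - b) ?orbT //; apply/eqP; slia.
- move=> x y; rewrite !iF' => Hx Hy Hbx Hxy.
  case/or4P: Hx => [Hx|/eqP Hx|/eqP Hx|/eqP Hx];
  case/or4P: Hy => [Hy|/eqP Hy|/eqP Hy|/eqP Hy];
  first [ slia | (have := Hup _ Hx; slia) | (have := Hup _ Hy; slia)
        | (apply: HspF => //; slia) ].
- have HDb : forall x, inD h x -> x <= p3 - p1.
    by move=> x /HD [x0 [E H]]; slia.
  move=> x y; rewrite !iD' => Hx Hy Hx1 Hx2 Hxy.
  case/or4P: Hx => [Hx|/eqP Hx|/eqP Hx|/eqP Hx];
  case/or4P: Hy => [Hy|/eqP Hy|/eqP Hy|/eqP Hy];
  first [ slia | (have := HDb _ Hx; slia) | (have := HDb _ Hy; slia)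
        | (apply: HspD => //; slia) ].
Qed.

Lemma Inv_base : Inv [:: (0, 0, 0)] (0, 0, 0).
Proof.
split => //=.
- by move=> x; rewrite leqn0 => /eqP ->.
- by move=> x; rewrite !inE => /or3P [] /eqP ->.
- by move=> d; rewrite !inE => /or3P [] /eqP ->; exists 0.
- by move=> e; rewrite leqn0 => /eqP ->.
- by move=> e; rewrite leqn0 => /eqP ->.
- by move=> x y; rewrite !inE => /or3P [] /eqP ->.
- move=> x y; rewrite /inD /= !inE => /or3P [] /eqP H; move: H; rewrite /t1 /t2 /t3 /= => H _; lia.
Qed.

Lemma hist_last n : last (0,0,0) (hist n.+1) = step (hist n).
Proof. by rewrite /= last_rcons. Qed.

Lemma Inv_hist n : Inv (hist n) (v n).
Proof.
elim: n => [|n IH]; first exact: Inv_base.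
have := Inv_step (hist n) IH.
by rewrite /v hist_last => -[H _].
Qed.

Theorem corollary4 :
  forall (i j : nat), (1 <= j)%N -> (j < i)%N -> (i <= 3)%N ->
  forall n : nat,
    ((i%:Z - j%:Z)
     <= ((vc i n.+1)%:Z - (vc j n.+1)%:Z) - ((vc i n)%:Z - (vc j n)%:Z))%R.
Proof.
move=> i j Hj Hji Hi n.
have [_ [A [B [C D]]]] := Inv_step (hist n) (Inv_hist n).
have I := Inv_hist n.
case: I => P1 P2 _ _ _ _ _ _ _.
rewrite -/(v n) in A B C D.
have E : step (hist n) = v n.+1 by rewrite /v hist_last.
rewrite E in A B C D.
rewrite /vc.
case: i Hji Hi => [|[|[|[|i]]]] //; case: j Hj => [|[|[|j]]] //= *; lia.
Qed.
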